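(* Let $L>n\ge 0$ and let $q(x)\in\mathrm{GF}(2)[x]/(x^L+1)$ be nonzero, represented as a polynomial of degree exactly $n$. Fix any set $S$ of $n$ bit positions that are consecutive modulo $L$, i.e. $S=\{k \bmod L, (k+1)\bmod L,\dots,(k+n-1)\bmod L\}$ for some integer $k$. Then for every $y\in\mathrm{GF}(2)[x]/(x^L+1)$, the number of $w\in\mathrm{GF}(2)[x]/(x^L+1)$ such that $q(x)w\bmod (x^L+1)$ and $y$ agree in every bit position outside $S$ is exactly $2^n$. (In particular this holds for $S=\{0,1,\dots,n-1\}$, the first $n$ bits.)
   Context: Elements of $\mathrm{GF}(2)[x]/(x^L+1)$ are identified with polynomials $\sum_{i=0}^{L-1}c_ix^i$ over $\mathrm{GF}(2)$; bit position $i$ refers to the coefficient $c_i$ of $x^i$. Two elements are ''equal modulo the positions in $S$'' if their coefficients agree at every position not in $S$. *)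

(* Defs.v *)
From HB Require Import structures.
From mathcomp Require Import all_boot all_order all_algebra.
Set Implicit Arguments. Unset Strict Implicit. Unset Printing Implicit Defensive.
Import GRing.Theory Num.Theory.
Local Open Scope ring_scope.

(* An element of GF(2)[x]/(x^L+1), given by its coefficient vector
   (c_0, ..., c_{L-1}); bit position i is coefficient c_i of x^i. *)
Definition cyc_elt (L : nat) := {ffun 'I_L -> 'F_2}.

Definition cyc_poly (L : nat) (c : cyc_elt L) : {poly 'F_2} := \poly_(i < L) (if @insub _ (fun m => (m < L)%N) 'I_L i is Some j then c j else 0).

Definition cyc_of_poly (L : nat) (p : {poly 'F_2}) : cyc_elt L :=
  [ffun i : 'I_L => (p %% ('X^L + 1))`_i].

Definition cyc_mul (L : nat) (q : {poly 'F_2}) (w : cyc_elt L) : cyc_elt L :=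
  cyc_of_poly L (q * cyc_poly w).

Definition eq_mod_pos (L : nat) (S : {set 'I_L}) (a b : cyc_elt L) : bool :=
  [forall i : 'I_L, (i \notin S) ==> (a i == b i)].

Definition consec_pos (L n : nat) (k : int) : {set 'I_L} :=
  [set i : 'I_L | [exists j : 'I_n, (i : nat)%:Z == ((k + (j : nat)%:Z) %% (L : int))%Z]].

(* Main.v *)
Require Import Defs.
From HB Require Import structures.
From mathcomp Require Import all_boot all_order all_algebra.
Import GRing.Theory Num.Theory.
Local Open Scope ring_scope.

Lemma oppF2 (x : 'F_2) : - x = x.
Proof. by case: x => [[|[|?]] ?] //; apply/val_inj. Qed.

Lemma oppP2 (p : {poly 'F_2}) : - p = p.
Proof. by apply/polyP => i; rewrite coefN oppF2. Qed.

Section Cyc.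
Variable l : nat.
Local Notation L := l.+1.
Local Notation M := ('X^L + 1 : {poly 'F_2}).

Lemma sizeM : size M = L.+1.
Proof. by rewrite -polyC1 size_XnaddC. Qed.

Lemma M0 : M != 0.
Proof. by rewrite -size_poly_eq0 sizeM. Qed.

Lemma modXL (A : {poly 'F_2}) : ('X^L * A) %% M = A %% M.
Proof.
have -> : 'X^L * A = A * M - A by rewrite mulrDr mulr1 addrK mulrC.
rewrite modpD modp_mull add0r oppP2 //=.
Qed.

Lemma modX t : 'X^t %% M = 'X^(t %% L)%N.
Proof.
rewrite {1}(divn_eq t L); elim: (t %/ L)%N => [|a IH].
  rewrite mul0n add0n modp_small // size_polyXn sizeM ltnS.
  by rewrite ltn_pmod.
by rewrite mulSn -addnA exprD modXL.
Qed.

Lemma modp_sumF (I : finType) (F : I -> {poly 'F_2}) :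
  (\sum_i F i) %% M = \sum_i (F i %% M).
Proof.
by apply: (big_morph (fun p => p %% M)) => [p q|]; rewrite ?modpD ?mod0p.
Qed.

Lemma polyL (r : {poly 'F_2}) : (size r <= L)%N ->
  r = \sum_(j < L) r`_j *: 'X^j.
Proof.
move=> hr; apply/polyP => i; rewrite coef_sum.
under eq_bigr do rewrite coefZ coefXn.
case: (ltnP i L) => hi.
  rewrite (bigD1 (Ordinal hi)) //= eqxx mulr1 big1 ?addr0 // => j hj.
  case: eqP => [h|]; last by rewrite mulr0.
  by case/eqP: hj; apply/val_inj.
rewrite big1; first by move/leq_sizeP: hr; apply.
move=> j _; case: eqP => [h|]; last by rewrite mulr0.
by move: (ltn_ord j); rewrite -h ltnNge hi.
Qed.

Lemma rotR m (p : {poly 'F_2}) i : (i < L)%N ->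
  (('X^m * p) %% M)`_((i + m) %% L)%N = (p %% M)`_i.
Proof.
move=> hi; rewrite -modp_mul.
set r := p %% M.
have hr : (size r <= L)%N by rewrite -ltnS -sizeM ltn_modp M0.
rewrite {1}(polyL _ hr) mulr_sumr modp_sumF coef_sum.
under eq_bigr do rewrite -scalerAr -exprD modpZl modX coefZ coefXn.
rewrite (bigD1 (Ordinal hi)) //= addnC eqxx mulr1 big1 ?addr0 // => j hj.
case: eqP => [h|]; last by rewrite mulr0.
exfalso; move: hj; rewrite -(inj_eq val_inj) /=.
move/eqP: h; rewrite eq_sym !(addnC m) eqn_modDr !modn_small //.
by move/eqP => ->; rewrite eqxx.
Qed.

End Cyc.
Lemma size_le (p : {poly 'F_2}) a b : (size p <= b)%N ->
  (forall u, (a <= u)%N -> (u < b)%N -> p`_u = 0) -> (size p <= a)%N.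
Proof.
move=> hb hz; rewrite leqNgt; apply/negP => ha.
have s0 : (0 < size p)%N by apply: leq_ltn_trans ha.
have p0 : p != 0 by rewrite -size_poly_eq0 -lt0n.
move: (p0); rewrite -lead_coef_eq0 /lead_coef hz ?eqxx //.
  by rewrite -ltnS prednK.
by rewrite prednK.
Qed.
Theorem mainTheorem6 (L n : nat) (q : {poly 'F_2}) (k : int) :
  (n < L)%N -> size q = n.+1 ->
  forall y : cyc_elt L,
    #|[set w : cyc_elt L | eq_mod_pos (consec_pos L n k) (cyc_mul q w) y]| = (2 ^ n)%N.
Proof.
move=> hnL hq y.
case: L hnL y => [//|l] hnL y.
pose k0 := `|(k %% (l.+1)%:Z)%Z|%N.
have hk0 : (k %% (l.+1)%:Z)%Z = k0%:Z.
  by rewrite /k0 gez0_abs // modz_ge0.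
have k0L : (k0 < l.+1)%N by rewrite -ltz_nat -hk0 ltz_pmod.
have Zk : forall j : nat, ((k + j%:Z) %% (l.+1)%:Z)%Z = ((k0 + j) %% l.+1)%N%:Z.
  by move=> j; rewrite -modzDml hk0 -PoszD modz_nat.
pose pos (u : nat) : 'I_l.+1 := inord ((k0 + u) %% l.+1).
have posE : forall u, (pos u : nat) = ((k0 + u) %% l.+1)%N.
  by move=> u; rewrite inordK // ltn_pmod.
pose D (i : nat) := ((i + (l.+1 - k0)) %% l.+1)%N.
have A1 : forall u, (u < l.+1)%N -> D ((k0+u) %% l.+1)%N = u.
  move=> u hu; rewrite /D modnDml addnAC subnKC ?(ltnW k0L) //.
  by rewrite addnC modnDr modn_small.
have A2 : forall i, (i < l.+1)%N -> ((k0 + D i) %% l.+1)%N = i.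
  move=> i hi; rewrite /D modnDmr addnCA subnKC ?(ltnW k0L) //.
  by rewrite modnDr modn_small.
have posD : forall i : 'I_l.+1, pos (D i) = i.
  by move=> i; apply/val_inj; rewrite /= posE A2.
have Dpos : forall u, (u < l.+1)%N -> D (pos u) = u.
  by move=> u hu; rewrite posE A1.
have inS : forall i : 'I_l.+1, (i \in consec_pos l.+1 n k) = (D i < n)%N.
  move=> i; rewrite inE; apply/existsP/idP => [[j]|h].
    rewrite Zk eqz_nat => /eqP ->; rewrite A1 //.
    exact: ltn_trans (ltn_ord j) hnL.
  by exists (Ordinal h); rewrite Zk /= A2.

pose Psi (w : cyc_elt l.+1) :=
  ([ffun j : 'I_n => w (pos (l.+1 - n + j)%N)],
   [ffun t : 'I_(l.+1 - n) => cyc_mul q w (pos (n + t)%N)]).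
pose ybar := [ffun t : 'I_(l.+1 - n) => y (pos (n + t)%N)].
have fib : forall w, eq_mod_pos (consec_pos l.+1 n k) (cyc_mul q w) y
                     = ((Psi w).2 == ybar).
  move=> w; apply/forallP/eqP => [h|h].
    apply/ffunP => t.
    have ht : (n + t < l.+1)%N by rewrite -ltn_subRL.
    have hS : pos (n + t)%N \notin consec_pos l.+1 n k.
      by rewrite inS (Dpos _ ht) -leqNgt leq_addr.
    move/implyP: (h (pos (n + t)%N)) => /(_ hS) /eqP.
    by rewrite !ffunE.
  move=> i; apply/implyP; rewrite inS -leqNgt => hi.
  have ht : (D i - n < l.+1 - n)%N.
    by rewrite -(ltn_add2l n) (subnKC hi) (subnKC (ltnW hnL)) ltn_pmod.
  move/ffunP: h => /(_ (Ordinal ht)); rewrite !ffunE /= subnKC // posD => ->.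
  by [].

have cpE : forall (w : cyc_elt l.+1) (i : 'I_l.+1), (cyc_poly w)`_i = w i.
  move=> w i; rewrite coef_poly ltn_ord; case: insubP => [j _ hj|].
    by congr (w _); apply/val_inj.
  by rewrite ltn_ord.
have cps : forall w : cyc_elt l.+1, (size (cyc_poly w) <= l.+1)%N.
  by move=> w; exact: size_poly.
have rot : forall (p : {poly 'F_2}) u, (u < l.+1)%N ->
    (('X^(l.+1 - k0)%N * p) %% ('X^(l.+1) + 1))`_u = (p %% ('X^(l.+1) + 1))`_(pos u).
  move=> p u hu; rewrite posE -{1}(A1 u hu) /D rotR // ltn_pmod //.

have Psi_inj : injective Psi.
  move=> w1 w2 [] /ffunP h1 /ffunP h2.
  pose Dp := cyc_poly w1 - cyc_poly w2.
  have szD : (size Dp <= l.+1)%N.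
    by apply: leq_trans (size_polyD _ _) _; rewrite size_polyN geq_max !cps.
  have DmodM : Dp %% ('X^(l.+1) + 1) = Dp.
    by rewrite modp_small // sizeM ltnS.
  have DposE : forall u, (u < l.+1)%N -> Dp`_(pos u) = w1 (pos u) - w2 (pos u).
    by move=> u hu; rewrite coefB !cpE.
  pose E := ('X^(l.+1 - k0)%N * Dp) %% ('X^(l.+1) + 1).
  have szE : (size E <= l.+1 - n)%N.
    apply: (@size_le _ _ l.+1).
      by rewrite -ltnS -(sizeM l) ltn_modp M0.
    move=> u hu1 hu2; rewrite /E rot // DmodM DposE //.
    have hj : (u - (l.+1 - n) < n)%N.
      by rewrite ltn_subLR // subnK // ltnW.
    move: (h1 (Ordinal hj)); rewrite !ffunE /= subnKC // => ->.
    by rewrite subrr.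
  have qE1 : (q * E) %% ('X^(l.+1) + 1) = q * E.
    apply: modp_small; rewrite sizeM ltnS.
    apply: leq_trans (size_polyMleq _ _) _; rewrite hq addSn /=.
    by rewrite -(subnKC (ltnW hnL)) leq_add2l.
  have szqE : (size (q * E)%R <= n)%N.
    apply: (@size_le _ _ l.+1).
      by rewrite -ltnS -(sizeM l) -qE1 ltn_modp M0.
    move=> u hu1 hu2; rewrite -qE1 /E modp_mul mulrA (mulrC q) -mulrA rot //.
    rewrite mulrBr modpD modpN coefD coefN.
    have ht : (u - n < l.+1 - n)%N by rewrite ltn_sub2r.
    move: (h2 (Ordinal ht)); rewrite !ffunE /= subnKC // => ->.
    by rewrite subrr.
  have E0 : E = 0.
    apply/eqP; apply: contraLR szqE => hE0.
    have q0 : q != 0 by rewrite -size_poly_eq0 hq.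
    rewrite size_mul // hq addSn /= -ltnNge -[X in (X < _)%N]addn0 ltn_add2l.
    by rewrite lt0n size_poly_eq0.
  have D0 : Dp = 0.
    have XE : 'X^(l.+1) * Dp = 'X^k0 * ('X^(l.+1 - k0)%N * Dp).
      by rewrite mulrA -exprD subnKC // ltnW.
    by rewrite -DmodM -modXL XE -modp_mul -/E E0 mulr0 mod0p.
  apply/ffunP => i; rewrite -!cpE; congr (_`_ _).
  by move: D0; rewrite /Dp => h; rewrite (subr0_eq h).

have t2 : (Zp_trunc (pdiv 2)).+2 = 2%N by [].
have onto : forall p, p \in codom Psi.
  apply: inj_card_onto Psi_inj _.
  rewrite card_prod !card_ffun !card_ord t2 -expnD subnKC; last exact: ltnW.
  exact: leqnn.
have -> : [set w : cyc_elt l.+1 | eq_mod_pos (consec_pos l.+1 n k) (cyc_mul q w) y]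
        = [set w | (Psi w).2 == ybar].
  by apply/setP => w; rewrite !inE fib.
rewrite -(card_in_imset (f := Psi)); last by move=> ? ? _ _; apply: Psi_inj.
rewrite (_ : Psi @: _ = [set (a, ybar) | a : {ffun 'I_n -> 'F_2}]).
  rewrite card_in_imset; last by move=> a b _ _ [].
  rewrite card_ffun !card_ord t2.
  by [].
apply/setP => p; apply/imsetP/imsetP => [[w]|[a _ ->]].
  rewrite inE => /eqP hw ->; exists (Psi w).1; first by [].
  by rewrite -hw; case: (Psi w).
case/codomP: (onto (a, ybar)) => w hw; exists w; last by [].
by rewrite inE -hw.
Qed.
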